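(* Let $r\ge 2$ and let $GT(r)$ be the glued binary tree of depth $r$. Then $\mathrm{gp}(GT(r))=2^r$.
   Context: The complete binary tree of depth $r$ is the rooted tree in which every non-leaf vertex has exactly two children and all $2^r$ leaves are at distance $r$ from the root. The glued binary tree $GT(r)$ is obtained from two copies of the complete binary tree of depth $r$ by identifying each leaf of the first copy with the corresponding leaf of the second copy (so it has $2^r$ identified vertices, called quasi-leaves). A set of vertices of a graph is a general position set if no three of its vertices lie on a common geodesic (shortest path); $\mathrm{gp}(G)$ is the maximum cardinality of a general position set of $G$. *)

(* Defs.v *)
From mathcomp Require Import all_boot.
Set Implicit Arguments. Unset Strict Implicit. Unset Printing Implicit Defensive.

Section Graph.
Variables (V : finType) (adj : rel V).

Definition walk (x : V) (p : seq V) (y : V) : bool :=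
  path adj x p && (last x p == y).

Definition geodesic (x : V) (p : seq V) : Prop :=
  path adj x p /\ forall q : seq V, walk x q (last x p) -> size p <= size q.

Definition on_common_geodesic (u v w : V) : Prop :=
  exists (x : V) (p : seq V),
    geodesic x p /\ [/\ u \in x :: p, v \in x :: p & w \in x :: p].

Definition gp_set (S : {set V}) : Prop :=
  forall u v w : V, u \in S -> v \in S -> w \in S ->
    u != v -> v != w -> u != w -> ~ on_common_geodesic u v w.

Definition is_gp_number (n : nat) : Prop :=
  (exists S : {set V}, gp_set S /\ #|S| = n) /\
  (forall S : {set V}, gp_set S -> #|S| <= n).
End Graph.

(* Vertices of the complete binary tree of depth r are labelled by heap
   indices i in [1, 2^(r+1)): the root is 1, the children of i are 2i and
   2i+1, and the leaves are the i with 2^r <= i < 2^(r+1).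
   A vertex of GT(r) is a pair (c, i): c : bool selects the copy, and the
   leaves (quasi-leaves) are identified, represented canonically with c = false. *)
Definition gt_valid (r : nat) (x : bool * 'I_(2 ^ r.+1)) : bool :=
  (0 < x.2) && ((2 ^ r <= x.2) ==> ~~ x.1).

Definition GTV (r : nat) : finType := {x : bool * 'I_(2 ^ r.+1) | @gt_valid r x}.

Definition gt_child (r : nat) (x y : bool * 'I_(2 ^ r.+1)) : bool :=
  (y.2./2 == x.2) && (if y.2 < 2 ^ r then x.1 == y.1 else true).

Definition gt_adj (r : nat) : rel (GTV r) :=
  fun x y => gt_child (val x) (val y) || gt_child (val y) (val x).

(* Main.v *)
Require Import Defs.
From mathcomp Require Import all_boot zify.
Set Implicit Arguments. Unset Strict Implicit. Unset Printing Implicit Defensive.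

Definition lv := trunc_log 2.

Lemma lvE n i : 2 ^ n <= i < 2 ^ n.+1 -> lv i = n.
Proof. by move=> H; apply: trunc_log_eq. Qed.

Lemma lv_bounds i : 0 < i -> 2 ^ lv i <= i < 2 ^ (lv i).+1.
Proof. by move=> H; apply: trunc_log_bounds. Qed.

Lemma lv_div i s : 0 < i -> s <= lv i -> lv (i %/ 2 ^ s) = lv i - s.
Proof.
move=> i0 sl; have /andP[b1 b2] := lv_bounds i0.
apply: lvE; apply/andP; split.
  by rewrite leq_divRL ?expn_gt0 // -expnD subnK.
by rewrite ltn_divLR ?expn_gt0 // -expnD addSn subnK.
Qed.

Lemma div_gt0 i s : 0 < i -> s <= lv i -> 0 < i %/ 2 ^ s.
Proof.
move=> i0 sl; have /andP[b1 b2] := lv_bounds i0.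
rewrite divn_gt0 ?expn_gt0 //; apply: leq_trans b1; by rewrite leq_exp2l.
Qed.

Lemma lv_double k : 0 < k -> lv k.*2 = (lv k).+1.
Proof. exact: trunc_log2_double. Qed.

Lemma lv_double1 k : 0 < k -> lv k.*2.+1 = (lv k).+1.
Proof.
move=> k0; have /andP[b1 b2] := lv_bounds k0.
apply: lvE; move: b1 b2; rewrite !expnS; lia.
Qed.

Definition sub (a i : nat) := i %/ 2 ^ (lv i - lv a) == a.

Lemma sub_refl a : sub a a.
Proof. by rewrite /sub subnn expn0 divn1. Qed.

Lemma sub_lv a i : 0 < a -> sub a i -> lv a <= lv i.
Proof.
move=> a0 /eqP H; case: (leqP (lv a) (lv i)) => // h.
have : lv i - lv a = 0 by lia.
by move=> e; move: H h; rewrite e expn0 divn1 => ->; rewrite ltnn.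
Qed.

Lemma sub_div i s : 0 < i -> s <= lv i -> sub (i %/ 2 ^ s) i.
Proof.
move=> i0 sl; rewrite /sub lv_div //.
by have -> : lv i - (lv i - s) = s by lia.
Qed.

Lemma sub_eq a i : 0 < a -> sub a i -> i %/ 2 ^ (lv i - lv a) = a.
Proof. by move=> _ /eqP. Qed.

Lemma sub_trans k i l : 0 < k -> 0 < i -> sub k i -> sub i l -> sub k l.
Proof.
move=> k0 i0 ki il.
have lki := sub_lv k0 ki; have lil := sub_lv i0 il.
rewrite /sub; move/eqP: ki => ki; move/eqP: il => il.
have -> : lv l - lv k = (lv l - lv i) + (lv i - lv k) by lia.
by rewrite expnD divnMA il ki.
Qed.

Section GT.
Variable r : nat.
Local Notation V := (GTV r).
Local Notation adj := (@gt_adj r).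

Definition idx (v : V) : nat := nat_of_ord (val v).2.
Definition cp (v : V) : bool := (val v).1.
Definition isleaf (v : V) := 2 ^ r <= idx v.

Lemma idx_gt0 v : 0 < idx v.
Proof. by case: v => [[c i] p]; rewrite /idx /=; case/andP: p. Qed.

Lemma idx_lt v : idx v < 2 ^ r.+1.
Proof. by rewrite /idx. Qed.

Lemma leaf_cp v : isleaf v -> cp v = false.
Proof. by case: v => [[c i] p]; rewrite /isleaf /idx /cp /=; case/andP: p => _ /implyP H /H /negbTE. Qed.

Lemma vert_eq u v : idx u = idx v -> cp u = cp v -> u = v.
Proof.
case: u v => [[c i] ?] [[d j] ?]; rewrite /idx /cp /= => e1 e2.
apply: val_inj => /=; congr (_, _) => //; exact: val_inj.
Qed.

Lemma one_lt : 1 < 2 ^ r.+1.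
Proof. have h : 0 < 2 ^ r by rewrite expn_gt0. rewrite expnS; lia. Qed.

Definition o1 : 'I_(2 ^ r.+1) := Ordinal one_lt.

Lemma v0_valid : @gt_valid r (false, o1).
Proof. by rewrite /gt_valid /= implybT. Qed.

Definition v0 : V := exist _ (false, o1) v0_valid.

Definition mk (c : bool) (i : nat) : V :=
  insubd v0 (c && (i < 2 ^ r), insubd o1 i).

Lemma mk_val c i : 0 < i < 2 ^ r.+1 ->
  idx (mk c i) = i /\ cp (mk c i) = c && (i < 2 ^ r).
Proof.
move=> /andP[i0 ir].
have vi : val (insubd o1 i : 'I_(2 ^ r.+1)) = i by rewrite val_insubd ir.
have H : @gt_valid r (c && (i < 2 ^ r), insubd o1 i).
  rewrite /gt_valid /= vi i0 /=; apply/implyP => h.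
  by rewrite negb_and -leqNgt h orbT.
by rewrite /mk /idx /cp val_insubd H /= vi.
Qed.

Lemma mk_idx c i : 0 < i < 2 ^ r.+1 -> idx (mk c i) = i.
Proof. by move/(mk_val c) => []. Qed.

Lemma mk_cp c i : 0 < i < 2 ^ r.+1 -> cp (mk c i) = c && (i < 2 ^ r).
Proof. by move/(mk_val c) => []. Qed.

Lemma mkK v : mk (cp v) (idx v) = v.
Proof.
have h : 0 < idx v < 2 ^ r.+1 by rewrite idx_gt0 idx_lt.
apply: vert_eq; rewrite ?mk_idx ?mk_cp //.
case: (ltnP (idx v) (2 ^ r)) => l; first by rewrite andbT.
by rewrite andbF leaf_cp.
Qed.

Lemma mk_leaf c i : 2 ^ r <= i < 2 ^ r.+1 -> mk c i = mk false i.
Proof.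
move=> /andP[a b].
have h : 0 < i < 2 ^ r.+1 by rewrite b andbT; apply: leq_trans a; rewrite expn_gt0.
apply: vert_eq; rewrite ?mk_idx ?mk_cp //; by rewrite ltnNge a !andbF.
Qed.

Lemma leaf_mk v c : isleaf v -> v = mk c (idx v).
Proof.
move=> l; rewrite mk_leaf ?idx_lt ?andbT // -(leaf_cp l); by rewrite mkK.
Qed.

Lemma adj_sym : symmetric adj.
Proof. by move=> x y; rewrite /gt_adj orbC. Qed.

Lemma adj_up c i : 1 < i < 2 ^ r.+1 -> adj (mk c i) (mk c i./2).
Proof.
move=> /andP[i1 ir].
have hi : 0 < i < 2 ^ r.+1 by rewrite ir andbT ltnW.
have hh : 0 < i./2 < 2 ^ r.+1.
  apply/andP; split; first by rewrite -divn2 divn_gt0.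
  by apply: leq_ltn_trans ir; rewrite -divn2 leq_div.
apply/orP; right; rewrite /gt_child.
have := mk_val c hi; have := mk_val c hh; rewrite /idx /cp => -[-> ->] [-> ->].
rewrite eqxx /=; case: ifP => // h.
have : i./2 < 2 ^ r by apply: leq_ltn_trans h; rewrite -divn2 leq_div.
by move=> ->; rewrite h.
Qed.

Lemma adj_idx u v : adj u v -> idx v = (idx u)./2 \/ idx u = (idx v)./2.
Proof.
by rewrite /gt_adj /gt_child => /orP[/andP[/eqP h _]|/andP[/eqP h _]]; [right|left].
Qed.

Lemma child_lv u v : idx v = (idx u)./2 -> lv (idx u) = (lv (idx v)).+1.
Proof.
move=> e; have v0 := idx_gt0 v.
have h1 : 1 < idx u.
  have : 0 < (idx u)./2 by rewrite -e.
  by rewrite -divn2 divn_gt0.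
by rewrite /lv (trunc_log2S h1) -e.
Qed.

Lemma adj_lv u v : adj u v -> lv (idx u) <= (lv (idx v)).+1 /\ lv (idx v) <= (lv (idx u)).+1.
Proof.
case/adj_idx => /child_lv ->; split => //; by apply: leqW.
Qed.

Lemma adj_cp u v : adj u v -> ~~ isleaf u -> ~~ isleaf v -> cp u = cp v.
Proof.
rewrite /isleaf -!ltnNge /gt_adj /gt_child /idx /cp.
by move=> /orP[/andP[_]|/andP[_]] + lu lv; rewrite ?lu ?lv => /eqP.
Qed.

Lemma isleafE v : isleaf v = (lv (idx v) == r).
Proof.
have /andP[b1 b2] := lv_bounds (idx_gt0 v).
have lt := idx_lt v; rewrite /isleaf.
apply/idP/eqP => [l|e]; first by apply: lvE; rewrite l.
by rewrite -e.
Qed.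

Lemma lv_le v : lv (idx v) <= r.
Proof.
have /andP[b1 b2] := lv_bounds (idx_gt0 v).
have := idx_lt v => h.
rewrite -ltnS -(ltn_exp2l _ _ (isT : 1 < 2)); exact: leq_ltn_trans b1 h.
Qed.

End GT.

Section W.
Variable r : nat.
Local Notation V := (GTV r).
Local Notation adj := (@gt_adj r).

Lemma walk_lv (x : V) p : path adj x p ->
  lv (idx x) <= lv (idx (last x p)) + size p /\ lv (idx (last x p)) <= lv (idx x) + size p.
Proof.
elim: p x => [|y p IH] x /=; first by rewrite !addn0.
move=> /andP[a /IH [h1 h2]]; have [l1 l2] := adj_lv a. set L := lv (idx (last y p)); set s := size p; split; lia.
Qed.

Lemma walk_split (x : V) p z : path adj x p -> z \in x :: p ->
  exists p1 p2, [/\ p = p1 ++ p2, last x p1 = z, path adj x p1 & path adj z p2].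
Proof.
move=> pa zin; case/splitPl: zin pa => p1 p2 e.
rewrite cat_path => /andP[h1 h2]; exists p1, p2; split => //; by rewrite -e.
Qed.

Lemma walk_cp (x : V) p : path adj x p -> all (fun v => ~~ isleaf v) (x :: p) ->
  cp (last x p) = cp x.
Proof.
elim: p x => [|y p IH] x //= /andP[a pa] /and3P[nx ny al].
rewrite IH //=; last by rewrite ny.
by apply/esym/adj_cp.
Qed.

Lemma edge_exit (u v : V) a : 0 < a -> adj u v -> sub a (idx u) -> ~~ sub a (idx v) ->
  idx v = a./2.
Proof.
move=> a0 e su nsv; have la := sub_lv a0 su.
case: (adj_idx e) => h.
- have lu := child_lv h.
  case: (ltnP (lv a) (lv (idx u))) => l.
    exfalso; move/negP: nsv; apply.
    have L : lv (idx u) - lv a = (lv (idx v) - lv a).+1 by lia.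
    by move: su; rewrite /sub L expnS divnMA divn2 -h.
  have e2 : lv (idx u) - lv a = 0 by lia.
  by move: su; rewrite /sub e2 expn0 divn1 => /eqP <-.
- have lu := child_lv h.
  exfalso; move/negP: nsv; apply; rewrite /sub.
  have -> : lv (idx v) - lv a = (lv (idx u) - lv a).+1 by lia.
  by rewrite expnS divnMA divn2 -h.
Qed.

Lemma walk_exit (x : V) p a : 0 < a -> path adj x p -> sub a (idx x) ->
  ~~ sub a (idx (last x p)) -> exists2 z, z \in x :: p & idx z = a./2.
Proof.
move=> a0; elim: p x => [|y p IH] x /=; first by move=> _ ->.
move=> /andP[e pa] sx nsl.
case: (boolP (sub a (idx y))) => sy.
  by case: (IH y pa sy nsl) => z zin iz; exists z => //; rewrite inE zin orbT.
by exists y; [rewrite !inE eqxx orbT | exact: edge_exit e sx sy].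
Qed.

End W.

Lemma rev_path_sym (T : Type) (e : rel T) (x : T) p : symmetric e ->
  path e x p -> path e (last x p) (rev (belast x p)).
Proof.
move=> se pa; rewrite rev_path; rewrite (eq_path (e' := e)) //.
Qed.

Lemma last_rev_belast (T : Type) (x : T) p : last (last x p) (rev (belast x p)) = x.
Proof.
have := congr1 (@rev T) (lastI x p); rewrite rev_rcons rev_cons => e.
by rewrite -(last_cons x) -e last_rcons.
Qed.

Lemma mem_rev_belast (T : eqType) (x z : T) p : z \in x :: p ->
  z \in last x p :: rev (belast x p).
Proof.
by rewrite -rev_rcons -lastI mem_rev.
Qed.

Section U.
Variable r : nat.
Local Notation V := (GTV r).
Local Notation adj := (@gt_adj r).

Fixpoint up (c : bool) (i n : nat) : seq V :=
  if n is n'.+1 then mk r c i./2 :: up c i./2 n' else [::].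

Lemma up_size c i n : size (up c i n) = n.
Proof. by elim: n i => //= n IH i; rewrite IH. Qed.

Lemma up_last c i n : last (mk r c i) (up c i n) = mk r c (i %/ 2 ^ n).
Proof.
elim: n i => [|n IH] i /=; first by rewrite expn0 divn1.
by rewrite IH -divn2 -divnMA -expnS.
Qed.

Lemma up_path c i n : 0 < i %/ 2 ^ n -> i < 2 ^ r.+1 -> path adj (mk r c i) (up c i n).
Proof.
elim: n i => [|n IH] i //= h ir.
have i1 : 1 < i.
  move: h; rewrite divn_gt0 ?expn_gt0 // expnS => h.
  have : 0 < 2 ^ n by rewrite expn_gt0. lia.
rewrite adj_up ?i1 ?ir //= IH //.
  by rewrite -divn2 -divnMA -expnS.
by apply: leq_ltn_trans ir; rewrite -divn2 leq_div.
Qed.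

Lemma up_mem c i n s : 0 < s <= n -> mk r c (i %/ 2 ^ s) \in up c i n.
Proof.
elim: n i s => [|n IH] i s /andP[s0 sn].
  by move: s0 sn; rewrite leqn0 => + /eqP e; rewrite e.
case: s s0 sn => [|s] // _ sn /=; rewrite inE; case: s sn => [|s] sn; first by rewrite expn1 divn2 eqxx.
apply/orP; right.
have -> : i %/ 2 ^ s.+2 = i./2 %/ 2 ^ s.+1 by rewrite -divn2 -divnMA -expnS.
by apply: IH.
Qed.

Lemma LB_chain c k q : 0 < k < 2 ^ r -> walk adj (mk r c k) q (mk r (~~ c) k) ->
  2 * (r - lv k) <= size q.
Proof.
move=> /andP[k0 kr] /andP[pa /eqP la].
have hk : 0 < k < 2 ^ r.+1.
  rewrite k0 /=; apply: (ltn_trans kr); rewrite expnS; have : 0 < 2 ^ r by rewrite expn_gt0. lia.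
have := walk_cp pa; rewrite la !mk_cp // kr !andbT.
case: (boolP (all (fun v => ~~ isleaf v) (mk r c k :: q))) => [al /(_ isT)|].
  by case: (c).
move=> /allPn [z zin]; rewrite negbK => zl _.
have [p1 [p2 [e l1 h1 h2]]] := walk_split pa zin.
have [a1 a2] := walk_lv h1; have [b1 b2] := walk_lv h2.
have lz : last z p2 = mk r (~~ c) k by rewrite -l1 -last_cat -e.
move: a1 a2 b1 b2; rewrite l1 lz e size_cat !mk_idx //.
move: zl; rewrite isleafE => /eqP ->.
set s1 := size p1; set s2 := size p2; lia.
Qed.


Lemma LB_exit (x y : V) q a : 0 < a -> walk adj x q y -> sub a (idx x) -> ~~ sub a (idx y) ->
  (lv (idx x) - lv a./2) + (lv (idx y) - lv a./2) <= size q.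
Proof.
move=> a0 /andP[pa /eqP la] sx sy.
have sy' : ~~ sub a (idx (last x q)) by rewrite la.
have [z zin iz] := walk_exit a0 pa sx sy'.
have [p1 [p2 [e l1 h1 h2]]] := walk_split pa zin.
have lz : last z p2 = y by rewrite -l1 -last_cat -e.
have [a1 a2] := walk_lv h1; have [b1 b2] := walk_lv h2.
move: a1 a2 b1 b2; rewrite l1 lz e size_cat iz.
set s1 := size p1; set s2 := size p2; lia.
Qed.

Lemma leaf_div_r u : 2 ^ r <= u < 2 ^ r.+1 -> u %/ 2 ^ r = 1.
Proof.
move=> /andP[a b]; have h : 0 < 2 ^ r by rewrite expn_gt0.
apply/eqP; rewrite eqn_leq leq_divRL // mul1n a /= -ltnS ltn_divLR //.
by rewrite -expnS andbT.
Qed.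

Lemma leaf_lv u : 2 ^ r <= u < 2 ^ r.+1 -> lv u = r.
Proof. exact: lvE. Qed.

Lemma leaf_pos u : 2 ^ r <= u < 2 ^ r.+1 -> 0 < u < 2 ^ r.+1.
Proof.
move=> /andP[a ->]; rewrite andbT; apply: leq_trans a; by rewrite expn_gt0.
Qed.

Lemma LB_leaf u w s q : 2 ^ r <= u < 2 ^ r.+1 -> 2 ^ r <= w < 2 ^ r.+1 ->
  u %/ 2 ^ s != w %/ 2 ^ s -> walk adj (mk r false u) q (mk r false w) ->
  2 * s.+1 <= size q.
Proof.
move=> hu hw ne wk.
have lu := leaf_lv hu; have lw := leaf_lv hw.
have pu := leaf_pos hu; have pw := leaf_pos hw.
have sr : s < r.
  rewrite ltnNge; apply/negP => rs; move/negP: ne; apply.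
  have -> : s = r + (s - r) by lia.
  by rewrite expnD !divnMA !leaf_div_r.
have u0 : 0 < u by case/andP: pu.
have a0 : 0 < u %/ 2 ^ s by apply: div_gt0; lia.
have sa : sub (u %/ 2 ^ s) u by apply: sub_div; lia.
have nsa : ~~ sub (u %/ 2 ^ s) w.
  have e1 : lv (u %/ 2 ^ s) = r - s by rewrite lv_div ?lu //; lia.
  rewrite /sub e1 lw; have -> : r - (r - s) = s by lia.
  by rewrite eq_sym.
have H : (lv u - lv (u %/ 2 ^ s)./2) + (lv w - lv (u %/ 2 ^ s)./2) <= size q.
  by have := LB_exit a0 wk; rewrite !mk_idx //; apply.
move: H; have -> : (u %/ 2 ^ s)./2 = u %/ 2 ^ s.+1 by rewrite -divn2 -divnMA -expnSr.
rewrite lv_div ?lu ?lw //; lia.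
Qed.

End U.

Section G.
Variable r : nat.
Local Notation V := (GTV r).
Local Notation adj := (@gt_adj r).

Definition isleafi (u : nat) := 2 ^ r <= u < 2 ^ r.+1.

Lemma tw_walk c u w t : isleafi u -> isleafi w -> t <= r -> u %/ 2 ^ t = w %/ 2 ^ t ->
  let p := up r c u t ++ rev (belast (mk r c w) (up r c w t)) in
  [/\ path adj (mk r c u) p, last (mk r c u) p = mk r c w & size p = 2 * t].
Proof.
move=> hu hw tr e p.
have lu := leaf_lv hu; have lw := leaf_lv hw.
have pu := leaf_pos hu; have pw := leaf_pos hw.
have u0 : 0 < u by case/andP: pu.
have w0 : 0 < w by case/andP: pw.
have ul : last (mk r c u) (up r c u t) = last (mk r c w) (up r c w t) by rewrite !up_last e.
split.
- rewrite cat_path up_path //=; last by case/andP: pu.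
    rewrite ul; apply: rev_path_sym; first exact: adj_sym.
    by apply: up_path; [apply: div_gt0; rewrite ?lw | case/andP: pw].
  by apply: div_gt0; rewrite ?lu.
- by rewrite last_cat ul last_rev_belast.
- by rewrite size_cat size_rev size_belast !up_size; lia.
Qed.

Definition chain c k l := rev (belast (mk r c l) (up r c l (r - lv k))) ++ up r (~~ c) l (r - lv k).

Lemma chain_geo c k l : 0 < k < 2 ^ r -> isleafi l -> sub k l ->
  geodesic adj (mk r c k) (chain c k l) /\
  forall v : V, sub (idx v) l -> sub k (idx v) -> v \in mk r c k :: chain c k l.
Proof.
move=> /andP[k0 kr] hl skl.
have ll := leaf_lv hl; have pl := leaf_pos hl.
have l0 : 0 < l by case/andP: pl.
have hk : 0 < k < 2 ^ r.+1.
  rewrite k0 /=; apply: (ltn_trans kr); rewrite expnS; have : 0 < 2 ^ r by rewrite expn_gt0. lia.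
set t := r - lv k.
have hlk : l %/ 2 ^ t = k by rewrite /t -ll; apply/eqP.
have ul : last (mk r c l) (up r c l t) = mk r c k by rewrite up_last hlk.
have lkr := sub_lv k0 skl.
have mcl : forall c', mk r c' l = mk r c l by move=> c'; rewrite (mk_leaf c') // (mk_leaf c).
have pth : path adj (mk r c k) (chain c k l).
  rewrite /chain cat_path; apply/andP; split.
    rewrite -ul; apply: rev_path_sym; first exact: adj_sym.
    by apply: up_path; [rewrite hlk | case/andP: pl].
  rewrite -{1}ul last_rev_belast -(mcl (~~ c)).
  by apply: up_path; [rewrite hlk | case/andP: pl].
have lst : last (mk r c k) (chain c k l) = mk r (~~ c) k.
  by rewrite /chain last_cat -{1}ul last_rev_belast -(mcl (~~ c)) up_last hlk.
split.
- split => // q; rewrite lst => wk.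
  have := LB_chain (_ : 0 < k < 2 ^ r) wk; rewrite k0 kr => /(_ isT).
  by rewrite /chain size_cat size_rev size_belast !up_size -/t; lia.
- move=> v sv skv.
  have v0 := idx_gt0 v.
  have lkv := sub_lv k0 skv.
  have lvr := lv_le v.
  have e : idx v = l %/ 2 ^ (lv l - lv (idx v)) by apply/esym/eqP.
  rewrite ll in e.
  have vmk := mkK v.
  case: (posnP (r - lv (idx v))) => s0.
  + have vl : idx v = l by rewrite e s0 expn0 divn1.
    have iv : isleaf v by rewrite /isleaf vl; case/andP: hl.
    rewrite (leaf_mk c iv) vl /chain -cat_cons mem_cat; apply/orP; left.
    have := @mem_rev_belast _ (mk r c l) (mk r c l) (up r c l t).
    by rewrite inE eqxx ul => /(_ isT).
  + have smem : 0 < r - lv (idx v) <= t by rewrite s0 /t; lia.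
    rewrite -vmk e; case: (boolP (cp v == c)) => /eqP hc.
    * rewrite hc.
      have := @mem_rev_belast _ (mk r c l) (mk r c (l %/ 2 ^ (r - lv (idx v)))) (up r c l t).
      rewrite inE up_mem // orbT ul => /(_ isT) h.
      by rewrite /chain -cat_cons mem_cat h.
    * have -> : cp v = ~~ c by case: (cp v) (c) hc => [] [].
      by rewrite inE /chain mem_cat up_mem ?orbT.
Qed.

End G.

Lemma last_take (T : Type) (x x0 : T) p i : i <= size p -> last x (take i p) = nth x0 (x :: p) i.
Proof.
elim: p x i => [|y p IH] x [|i] //= h.
by rewrite IH.
Qed.

Section Geo.
Variables (V : finType) (e : rel V).

Lemma geo_sub x p i j x0 q : geodesic e x p -> i <= j <= size p ->
  walk e (nth x0 (x :: p) i) q (nth x0 (x :: p) j) -> j - i <= size q.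
Proof.
move=> [pa mn] /andP[ij jp] /andP[pq /eqP lq].
have ip : i <= size p by apply: leq_trans jp.
have hi : last x (take i p) = nth x0 (x :: p) i by rewrite (last_take _ x0).
have hj : last x (take j p) = nth x0 (x :: p) j by rewrite (last_take _ x0).
have := mn (take i p ++ q ++ drop j p).
have pa1 := pa; rewrite -(cat_take_drop i p) cat_path in pa1; case/andP: pa1 => p1 _.
have pa2 := pa; rewrite -(cat_take_drop j p) cat_path in pa2; case/andP: pa2 => _ p3.
rewrite /walk cat_path p1 /= cat_path hi pq lq -hj p3 /=.
rewrite !last_cat hi lq -hj -last_cat cat_take_drop eqxx => /(_ isT).
rewrite !size_cat size_takel // size_drop; lia.
Qed.

Lemma seg_walk x p i j x0 : path e x p -> i <= j <= size p ->
  walk e (nth x0 (x :: p) i) (take (j - i) (drop i p)) (nth x0 (x :: p) j) /\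
  size (take (j - i) (drop i p)) = j - i.
Proof.
move=> pa /andP[ij jp].
have ip : i <= size p by apply: leq_trans jp.
have hi : last x (take i p) = nth x0 (x :: p) i by rewrite (last_take _ x0).
have pa1 := pa; rewrite -(cat_take_drop i p) cat_path in pa1; case/andP: pa1 => _.
rewrite hi -{1}(cat_take_drop (j - i) (drop i p)) cat_path => /andP[h _].
split; last by rewrite size_takel // size_drop; lia.
rewrite /walk h /= (last_take _ x0); last by rewrite size_drop; lia.
have -> : nth x0 (x :: p) i :: drop i p = drop i (x :: p).
  by rewrite [RHS](drop_nth x0) //=; lia.
by rewrite nth_drop; have -> : i + (j - i) = j by lia.
Qed.

End Geo.

Section L.
Variable r : nat.
Local Notation V := (GTV r).
Local Notation adj := (@gt_adj r).

Lemma isleafiP (v : V) : isleaf v -> isleafi r (idx v).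
Proof. by move=> l; rewrite /isleafi idx_lt andbT. Qed.

Lemma leaf_inj (a b : V) : isleaf a -> isleaf b -> idx a = idx b -> a = b.
Proof. by move=> la lb e; apply: vert_eq => //; rewrite !leaf_cp. Qed.

Lemma meet_exists (a b : V) : isleaf a -> isleaf b -> exists s, idx a %/ 2 ^ s == idx b %/ 2 ^ s.
Proof.
move=> la lb; exists r; rewrite !leaf_div_r //; exact: isleafiP.
Qed.

Lemma triple_contra x p (a b c : V) ia ib ic :
  geodesic adj x p -> isleaf a -> isleaf b -> isleaf c ->
  a != b -> b != c -> ia < ib -> ib < ic -> ic <= size p ->
  nth x (x :: p) ia = a -> nth x (x :: p) ib = b -> nth x (x :: p) ic = c -> False.
Proof.
move=> geo la lb lc nab nbc iab ibc icp ea eb ec.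
have ha := isleafiP la; have hb := isleafiP lb; have hc := isleafiP lc.
have lb_seg : forall (u w : V) iu iw s, isleaf u -> isleaf w -> iu <= iw <= size p ->
    nth x (x :: p) iu = u -> nth x (x :: p) iw = w ->
    idx u %/ 2 ^ s != idx w %/ 2 ^ s -> 2 * s.+1 <= iw - iu.
  move=> u w iu iw s lu lw h eu ew ne.
  have [wk sz] := @seg_walk _ adj x p iu iw x geo.1 h.
  rewrite -sz; apply: (LB_leaf (isleafiP lu) (isleafiP lw) ne).
  by rewrite -(leaf_mk false lu) -(leaf_mk false lw) -eu -ew.
have minP : forall u w : V, isleaf u -> isleaf w -> u != w -> exists s,
    [/\ 0 < s, s <= r, idx u %/ 2 ^ s == idx w %/ 2 ^ s & idx u %/ 2 ^ s.-1 != idx w %/ 2 ^ s.-1].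
  move=> u w lu lw nuw.
  case: (ex_minnP (meet_exists lu lw)) => s Ps mins.
  have s0 : 0 < s.
    case: s Ps mins => // /=; rewrite !expn0 !divn1 => /eqP e _.
    by move: nuw; rewrite (leaf_inj lu lw e) eqxx.
  exists s; split => //.
  - by apply: mins; rewrite !leaf_div_r //; exact: isleafiP.
  - by apply/negP => /mins; rewrite -ltnS prednK // ltnn.
have [s1 [s10 s1r /eqP e1 n1]] := minP a b la lb nab.
have [s2 [s20 s2r /eqP e2 n2]] := minP b c lb lc nbc.
have L1 : 2 * s1.-1.+1 <= ib - ia.
  by apply: (lb_seg a b ia ib _ la lb) => //; rewrite (ltnW iab) /= (leq_trans (ltnW ibc) icp).
have L2 : 2 * s2.-1.+1 <= ic - ib.
  by apply: (lb_seg b c ib ic _ lb lc) => //; rewrite (ltnW ibc) /=.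
have up_eq : forall u w s t, s <= t -> u %/ 2 ^ s = w %/ 2 ^ s -> u %/ 2 ^ t = w %/ 2 ^ t.
  move=> u w s t st h; rewrite -(subnKC st).
  by rewrite expnD !divnMA h.
set M := maxn s1 s2.
have eac : idx a %/ 2 ^ M = idx c %/ 2 ^ M.
  rewrite (@up_eq (idx a) (idx b) s1 M) ?leq_maxl //.
  by apply: (@up_eq _ _ s2 M) => //; rewrite leq_maxr.
have Mr : M <= r by rewrite geq_max s1r s2r.
have [pth lst sz] := tw_walk false ha hc Mr eac.
have h1 : ia <= ic <= size p by rewrite (ltnW (ltn_trans iab ibc)) icp.
rewrite -(leaf_mk false la) -(leaf_mk false lc) in pth lst sz.
have := @geo_sub _ adj x p ia ic x (up r false (idx a) M ++ rev (belast c (up r false (idx c) M))) geo h1.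
rewrite ea ec /walk pth lst eqxx sz => /(_ isT).
rewrite (prednK s10) in L1; rewrite (prednK s20) in L2.
rewrite /M; move: L1 L2 s10 s20 iab ibc; clear; lia.
Qed.


Lemma leaves_gp : gp_set adj [set v : V | isleaf v].
Proof.
move=> u v w; rewrite !inE => lu lv lw nuv nvw nuw [x [p [geo [mu mv mw]]]].
have nu := nth_index x mu; have nv := nth_index x mv; have nw := nth_index x mw.
have su : index u (x :: p) <= size p by rewrite -ltnS; move: mu; rewrite -index_mem.
have sv : index v (x :: p) <= size p by rewrite -ltnS; move: mv; rewrite -index_mem.
have sw : index w (x :: p) <= size p by rewrite -ltnS; move: mw; rewrite -index_mem.
move: nu nv nw su sv sw.
set iu := index u _; set iv := index v _; set iw := index w _ => nu nv nw su sv sw.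
have nvu : v != u by rewrite eq_sym.
have nwv : w != v by rewrite eq_sym.
have nwu : w != u by rewrite eq_sym.
case: (ltngtP iu iv) => h1; last by move: nuv; rewrite -nu -nv h1 eqxx.
- case: (ltngtP iv iw) => h2; last by move: nvw; rewrite -nv -nw h2 eqxx.
  + exact: (triple_contra geo lu lv lw nuv nvw h1 h2 sw nu nv nw).
  + case: (ltngtP iu iw) => h3; last by move: nuw; rewrite -nu -nw h3 eqxx.
    * exact: (triple_contra geo lu lw lv nuw nwv h3 h2 sv nu nw nv).
    * exact: (triple_contra geo lw lu lv nwu nuv h3 h1 sv nw nu nv).
- case: (ltngtP iu iw) => h2; last by move: nuw; rewrite -nu -nw h2 eqxx.
  + exact: (triple_contra geo lv lu lw nvu nuw h1 h2 sw nv nu nw).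
  + case: (ltngtP iv iw) => h3; last by move: nvw; rewrite -nv -nw h3 eqxx.
    * exact: (triple_contra geo lv lw lu nvw nwu h3 h2 su nv nw nu).
    * exact: (triple_contra geo lw lv lu nwv nvu h3 h1 su nw nv nu).
Qed.

Lemma leaves_card : #|[set v : V | isleaf v]| = 2 ^ r.
Proof.
pose f (j : 'I_(2 ^ r)) : V := mk r false (2 ^ r + j).
have hj : forall j : 'I_(2 ^ r), 0 < 2 ^ r + j < 2 ^ r.+1.
  move=> j; have := ltn_ord j; have : 0 < 2 ^ r by rewrite expn_gt0.
  rewrite expnS; move: (2 ^ r) (nat_of_ord j) => a b; lia.
have finj : injective f.
  move=> j1 j2 e; apply: val_inj => /=.
  have := congr1 (@idx r) e; rewrite /f !mk_idx //; lia.
have -> : [set v : V | isleaf v] = f @: setT.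
  apply/setP => v; rewrite inE; apply/idP/imsetP.
  - move=> l; have lt : idx v - 2 ^ r < 2 ^ r.
      have := idx_lt v; rewrite expnS; move: l; rewrite /isleaf.
      move: (2 ^ r) (idx v) => a b; lia.
    exists (Ordinal lt); first by [].
    rewrite /f /= subnKC //; exact: leaf_mk.
  - case=> j _ ->; rewrite /isleaf /f mk_idx //; exact: leq_addr.
by rewrite card_imset // cardsT card_ord.
Qed.

End L.

Section UB.
Variable r : nat.
Local Notation V := (GTV r).
Local Notation adj := (@gt_adj r).

Lemma gp_subset (S T : {set V}) : gp_set adj S -> T \subset S -> gp_set adj T.
Proof.
move=> g sub u v w hu hv hw; apply: g; by apply: (subsetP sub).
Qed.

Lemma lv_lt_r k : 0 < k -> k < 2 ^ r -> lv k < r.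
Proof.
move=> k0 kr; have /andP[b1 _] := lv_bounds k0.
by rewrite -(ltn_exp2l _ _ (isT : 1 < 2)); apply: leq_ltn_trans kr.
Qed.

Lemma lt_r_lv k : 0 < k -> lv k < r -> k < 2 ^ r.
Proof.
move=> k0 kr; have /andP[_ b2] := lv_bounds k0.
by apply: (leq_trans b2); rewrite leq_exp2l.
Qed.

Lemma le_r_lv k : 0 < k -> lv k <= r -> k < 2 ^ r.+1.
Proof.
move=> k0 kr; have /andP[_ b2] := lv_bounds k0.
by apply: (leq_trans b2); rewrite leq_exp2l.
Qed.

Lemma leaf_below i j : 0 < i -> lv i <= r -> j < 2 ^ (r - lv i) ->
  let l := i * 2 ^ (r - lv i) + j in isleafi r l /\ sub i l.
Proof.
move=> i0 ir jd l.
have /andP[b1 b2] := lv_bounds i0.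
have d0 : 0 < 2 ^ (r - lv i) by rewrite expn_gt0.
have hl : isleafi r l.
  apply/andP; split.
    rewrite /l; apply: leq_trans (leq_addr _ _).
    have -> : 2 ^ r = 2 ^ lv i * 2 ^ (r - lv i) by rewrite -expnD subnKC.
    by rewrite leq_mul2r b1 orbT.
  have -> : 2 ^ r.+1 = 2 ^ (lv i).+1 * 2 ^ (r - lv i) by rewrite -expnD addSn subnKC.
  apply: (@leq_trans ((i.+1) * 2 ^ (r - lv i))).
    by rewrite /l mulSn addnC ltn_add2r.
  by rewrite leq_mul2r b2 orbT.
split => //.
by rewrite /sub (leaf_lv hl) /l divnMDl // divn_small // addn0.
Qed.

Lemma halves_contra c k (u w : V) : 0 < k < 2 ^ r -> isleaf u -> isleaf w ->
  idx u %/ 2 ^ (r - lv k) = k -> idx w %/ 2 ^ (r - lv k) = k ->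
  idx u %/ 2 ^ (r - lv k).-1 != idx w %/ 2 ^ (r - lv k).-1 ->
  on_common_geodesic adj u (mk r c k) w.
Proof.
move=> /andP[k0 kr] lu lw eu ew ne.
have ltr := lv_lt_r k0 kr.
set t := r - lv k.
have t0 : 0 < t by rewrite /t subn_gt0.
have tr : t <= r by rewrite /t leq_subr.
have hu := isleafiP lu; have hw := isleafiP lw.
have [pth lst sz] := tw_walk c hu hw tr (etrans eu (esym ew)).
rewrite -!(leaf_mk c lu) -!(leaf_mk c lw) in pth lst sz.
exists u, (up r c (idx u) t ++ rev (belast w (up r c (idx w) t))); split.
- split => // q; rewrite lst sz => wk.
  have := LB_leaf hu hw ne; rewrite -!(leaf_mk false lu) -!(leaf_mk false lw) => /(_ q wk).
  by rewrite prednK.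
- split.
  + by rewrite inE eqxx.
  + by rewrite inE mem_cat -eu up_mem ?orbT // t0 leqnn.
  + by have := mem_last u (up r c (idx u) t ++ rev (belast w (up r c (idx w) t))); rewrite lst.
Qed.


Lemma no_root_split k (S : {set V}) v : 0 < k -> v \in S -> sub k (idx v) ->
  mk r false k \notin S -> mk r true k \notin S -> sub k.*2 (idx v) || sub k.*2.+1 (idx v).
Proof.
move=> k0 vS skv n0 n1.
have i0 := idx_gt0 v.
have lk := sub_lv k0 skv.
case: (ltnP (lv k) (lv (idx v))) => l; last first.
  have e : lv (idx v) - lv k = 0 by apply/eqP; rewrite subn_eq0.
  move: skv; rewrite /sub e expn0 divn1 => /eqP ek.
  by move: vS; rewrite -(mkK v) ek; case: (cp v); rewrite ?(negbTE n0) ?(negbTE n1).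
set s := lv (idx v) - lv k - 1.
have sl : s <= lv (idx v) by rewrite /s; lia.
have sh := sub_div i0 sl.
have hk : (idx v %/ 2 ^ s)./2 = k.
  rewrite -divn2 -divnMA -expnSr.
  have -> : s.+1 = lv (idx v) - lv k by rewrite /s; lia.
  by apply/eqP.
have := odd_double_half (idx v %/ 2 ^ s); rewrite hk => e; rewrite -e in sh.
by move: sh; case: (odd _) => /=; rewrite ?add0n ?add1n => ->; rewrite ?orbT.
Qed.

Lemma cover_chain c k (S : {set V}) l v w : gp_set adj S -> 0 < k < 2 ^ r ->
  mk r c k \in S -> v \in S -> w \in S -> v != mk r c k -> w != mk r c k ->
  isleafi r l -> sub k l -> sub (idx v) l -> sub (idx w) l ->
  sub k (idx v) -> sub k (idx w) -> v = w.
Proof.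
move=> g hk zS vS wS nvz nwz hl skl svl swl skv skw.
have [geo mem] := chain_geo c hk hl skl.
apply/eqP/negP => /negP nvw.
apply: (g _ _ _ zS vS wS) => //; first by rewrite eq_sym.
  by rewrite eq_sym.
exists (mk r c k), (chain r c k l); split => //; split.
- by rewrite inE eqxx.
- exact: mem.
- exact: mem.
Qed.

End UB.

Section M.
Variable r : nat.
Local Notation V := (GTV r).
Local Notation adj := (@gt_adj r).

Lemma eq_by_divmod l1 l2 N k : l1 %/ N = k -> l2 %/ N = k -> l1 %% N = l2 %% N -> l1 = l2.
Proof. by move=> e1 e2 e3; rewrite (divn_eq l1 N) (divn_eq l2 N) e1 e2 e3. Qed.

Lemma ub n : forall k (S : {set V}), lv k + n = r -> 0 < k -> gp_set adj S ->
  (forall v, v \in S -> sub k (idx v)) -> #|S| <= 2 ^ n.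
Proof.
elim: n => [|n IH] k S hl k0 g hS.
- rewrite addn0 in hl.
  have sub1 : S \subset [set mk r false k].
    apply/subsetP => v vS; rewrite inE.
    have skv := hS v vS; have lk := sub_lv k0 skv; have lr := lv_le v.
    have e : lv (idx v) - lv k = 0.
      by apply/eqP; rewrite subn_eq0 hl.
    move: skv; rewrite /sub e expn0 divn1 => /eqP ek.
    have lv' : isleaf v.
      by rewrite isleafE; apply/eqP; apply/anti_leq; rewrite lr /=; rewrite hl in lk.
    by rewrite (leaf_mk false lv') ek.
  by rewrite expn0 -(cards1 (mk r false k)); apply: subset_leq_card.
- have ltr : lv k < r by rewrite -hl addnS ltnS leq_addr.
  have kr := lt_r_lv k0 ltr.
  have hk : 0 < k < 2 ^ r by rewrite k0 kr.
  have ed : r - lv k = n.+1 by rewrite -hl addKn.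
  case: (boolP ((mk r false k \in S) || (mk r true k \in S))) => [hz|]; last first.
    rewrite negb_or => /andP[n0 n1].
    set S1 := [set v in S | sub k.*2 (idx v)]; set S2 := [set v in S | sub k.*2.+1 (idx v)].
    have k20 : 0 < k.*2 by rewrite double_gt0.
    have k21 : 0 < k.*2.+1 by [].
    have h1 : #|S1| <= 2 ^ n.
      apply: (IH k.*2) => //.
      + by rewrite lv_double // addSnnS.
      + by apply: (gp_subset g); apply/subsetP => v; rewrite inE => /andP[].
      + by move=> v; rewrite inE => /andP[].
    have h2 : #|S2| <= 2 ^ n.
      apply: (IH k.*2.+1) => //.
      + by rewrite lv_double1 // addSnnS.
      + by apply: (gp_subset g); apply/subsetP => v; rewrite inE => /andP[].
      + by move=> v; rewrite inE => /andP[].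
    have : S \subset S1 :|: S2.
      apply/subsetP => v vS; rewrite !inE vS /=.
      exact: (no_root_split k0 vS (hS v vS) n0 n1).
    move/subset_leq_card => h; apply: (leq_trans h).
    rewrite cardsU expnS mul2n -addnn; apply: leq_trans (leq_subr _ _) _.
    exact: leq_add.
  have [c zS] : exists c, mk r c k \in S by case/orP: hz => h; [exists false | exists true].
  set z := mk r c k.
  set S' := S :\ z.
  have cS : #|S| = (#|S'|).+1 by rewrite (cardsD1 z S) zS.
  have S'S : forall v, v \in S' -> v \in S /\ v != z by move=> v; rewrite in_setD1 => /andP[].
  rewrite cS.
  have skS' : forall v, v \in S' -> sub k (idx v) by move=> v /S'S [/hS].
  case: (boolP [exists v in S', ~~ isleaf v]) => [/existsP [v0 /andP[v0S nl0]] | allleaf].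
  -
    pose N := 2 ^ n.+1.
    have N0 : 0 < N by rewrite expn_gt0.
    pose o : 'I_N := Ordinal N0.
    pose ll (v : V) := idx v * 2 ^ (r - lv (idx v)) + 0.
    pose f (v : V) : 'I_N := insubd o (ll v %% N).
    have fv : forall v, val (f v) = ll v %% N by move=> v; rewrite val_insubd ltn_pmod.
    have leafk : forall l, isleafi r l -> sub k l -> l %/ N = k.
      move=> l hll skl; have := leaf_lv hll; move: skl; rewrite /sub => /eqP + e.
      by rewrite e ed.
    have key : forall v, v \in S' -> [/\ isleafi r (ll v), sub (idx v) (ll v), sub k (ll v) & ll v %/ N = k].
      move=> v vS; have e0 : 0 < 2 ^ (r - lv (idx v)) by rewrite expn_gt0.
      have [hl0 sl] := @leaf_below r (idx v) 0 (idx_gt0 v) (lv_le v) e0.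
      have skl : sub k (ll v) by apply: (sub_trans k0 (idx_gt0 v) (skS' v vS) sl).
      by split => //; apply: leafk.
    have inj : {in S' &, injective f}.
      move=> v w vS wS e.
      have [hlv slv sklv dv] := key v vS; have [hlw slw sklw dw] := key w wS.
      have ell : ll v = ll w by apply: (eq_by_divmod dv dw); rewrite -!fv e.
      have [vS1 nvz] := S'S v vS; have [wS1 nwz] := S'S w wS.
      apply: (cover_chain g hk zS vS1 wS1 nvz nwz hlv sklv slv) => //.
        by rewrite ell.
      exact: skS'.
      exact: skS'.
    set d := r - lv (idx v0).
    have d0 : 0 < d.
      rewrite /d subn_gt0 ltn_neqAle lv_le andbT; by rewrite isleafE in nl0.
    have jd : 2 ^ d - 1 < 2 ^ d by rewrite subn1 prednK ?ltnSn // expn_gt0.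
    have [hlr slr] := leaf_below (idx_gt0 v0) (lv_le v0) jd.
    set rho := idx v0 * 2 ^ (r - lv (idx v0)) + (2 ^ d - 1) in hlr slr.
    have sklr : sub k rho by apply: (sub_trans k0 (idx_gt0 v0) (skS' v0 v0S) slr).
    have rk := leafk _ hlr sklr.
    pose j0 : 'I_N := insubd o (rho %% N).
    have miss : forall w, w \in S' -> f w != j0.
      move=> w wS; apply/negP => /eqP e.
      have [hlw slw sklw dw] := key w wS.
      have ew : ll w = rho.
        apply: (eq_by_divmod dw rk); rewrite -fv e val_insubd ltn_pmod //.
      have [vS1 nvz] := S'S v0 v0S; have [wS1 nwz] := S'S w wS.
      have wv : w = v0.
        apply: (cover_chain g hk zS wS1 vS1 nwz nvz hlr sklr) => //.
        - by rewrite -ew.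
        - exact: skS'.
        - exact: skS'.
      move: ew; rewrite wv /ll addn0 => /eqP; rewrite -{1}(addn0 (idx v0 * _)) eqn_add2l.
      rewrite eq_sym subn_eq0 -(expn0 2) leq_exp2l // leqn0 => /eqP d00.
      by move: d0; rewrite -/d d00.
    have : f @: S' \subset [set~ j0].
      apply/subsetP => j /imsetP [w wS ->]; rewrite !inE; exact: miss.
    move/subset_leq_card; rewrite cardsC1 card_ord (card_in_imset inj) => h.
    by rewrite -ltnS prednK in h.
  -
    have al : forall v, v \in S' -> isleaf v.
      move=> v vS; apply/negPn/negP => h; move/negP: allleaf; apply.
      by apply/existsP; exists v; rewrite vS h.
    have ek : forall v, v \in S' -> idx v %/ 2 ^ (r - lv k) = k.
      move=> v vS; have := skS' v vS; rewrite /sub.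
      by move: (al v vS); rewrite isleafE => /eqP -> /eqP.
    case: (boolP [exists u in S', exists w in S', idx u %/ 2 ^ n != idx w %/ 2 ^ n]).
    + move=> /existsP [u /andP[uS /existsP [w /andP[wS ne]]]].
      exfalso.
      have [uS1 nuz] := S'S u uS; have [wS1 nwz] := S'S w wS.
      have ne' : idx u %/ 2 ^ (r - lv k).-1 != idx w %/ 2 ^ (r - lv k).-1 by rewrite ed.
      have cg := halves_contra c hk (al u uS) (al w wS) (ek u uS) (ek w wS) ne'.
      apply: (g _ _ _ uS1 zS wS1 nuz _ _ cg); first by rewrite eq_sym.
      by apply/eqP => e; move: ne; rewrite e eqxx.
    + move=> nex.
      have same : forall u w, u \in S' -> w \in S' -> idx u %/ 2 ^ n = idx w %/ 2 ^ n.
        move=> u w uS wS; apply/eqP/negPn/negP => h; move/negP: nex; apply.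
        by apply/existsP; exists u; rewrite uS /=; apply/existsP; exists w; rewrite wS.
      case: (set_0Vmem S') => [-> | [u0 u0S]].
        by rewrite cards0 expn_gt0.
      have nr : n <= r by move: ltr; rewrite -hl; clear; lia.
      have lu0 : lv (idx u0) = r by apply/eqP; rewrite -isleafE; exact: al.
      have nl : n <= lv (idx u0) by rewrite lu0.
      have IH' : #|S'| <= 2 ^ n.
        apply: (IH (idx u0 %/ 2 ^ n)).
        + by rewrite (lv_div (idx_gt0 u0) nl) lu0 subnK.
        + exact: div_gt0 (idx_gt0 u0) nl.
        + by apply: (gp_subset g); exact: subD1set.
        + move=> w wS; rewrite /sub (lv_div (idx_gt0 u0) nl) lu0.
          have := al w wS; rewrite isleafE => /eqP ->.
          rewrite subKn // (same w u0) //.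
      apply: (leq_ltn_trans IH'); rewrite expnS; have : 0 < 2 ^ n by rewrite expn_gt0.
      move: (2 ^ n); clear; lia.
Qed.

End M.

Lemma sub1 i : 0 < i -> sub 1 i.
Proof.
move=> i0; have /andP[b1 b2] := lv_bounds i0.
rewrite /sub /lv trunc_log1 subn0 -/(lv i); apply/eqP/anti_leq.
have h : 0 < 2 ^ lv i by rewrite expn_gt0.
rewrite -ltnS ltn_divLR // mulSn mul1n leq_divRL // mul1n b1 andbT.
by rewrite expnS mul2n -addnn in b2.
Qed.

Theorem proposition3p8 (r : nat) (hr : 2 <= r) :
  is_gp_number (@gt_adj r) (2 ^ r).
Proof.
split.
- exists [set v | isleaf v]; split; [exact: leaves_gp | exact: leaves_card].
- move=> S g.
  have e : lv 1 + r = r by rewrite /lv trunc_log1.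
  have hs : forall v, v \in S -> sub 1 (idx v) by move=> v _; apply: sub1; exact: idx_gt0.
  exact: (@ub r r 1 S e isT g hs).
Qed.
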